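(* Fix $K\ge 2$, $d\ge 1$ and $\alpha\in[0,1]$. Let $F_1,\dots,F_K$ be probability distributions on $\mathbb{R}^d$, and suppose that a signal set $L\subseteq[d]$ exists. Let $\mathcal{T}$ be a fixed (non-random) tree of subsets of $[d]$ satisfying properties (T1)–(T3) below. For each $n$, suppose the data consist of independent observations, $n_i$ of them from $F_i$ ($i=1,\dots,K$), $n=n_1+\dots+n_K$, and for every node $C$ of $\mathcal{T}$ let $p^C$ be the $p$-value of a test of $H_{0,C}$ computed from the submatrix $\mathbf{X}_C$. Assume: (i) (validity) for every node $C$ for which $H_{0,C}$ is true and every $u\in[0,1]$, $\mathbb{P}(p^C\le u)\le u$; (ii) (consistency at every level) for every node $C$ for which $H_{0,C}$ is false, $p^C\to 0$ in probability as $n\to\infty$. Let $S$ be the set of features selected by the GFS procedure at level $\alpha$. Then, as $n\to\infty$ with $d$ fixed, $$\mathbb{P}(L\subseteq S)\to 1,\qquad \mathbb{P}(S\setminus L\neq\emptyset)\le \alpha+o(1),\qquad \mathbb{E}\!\left[\frac{|S\setminus L|}{\max\{|S|,1\}}\right]\le \alpha+o(1).$$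
   Context: Notation: $[d]=\{1,\dots,d\}$. $\mathbf{X}$ is the $n\times d$ data matrix whose rows are the observations; for $C\subseteq[d]$, $\mathbf{X}_C$ is the submatrix consisting of the columns indexed by $C$. For $B\subseteq[d]$ and $X=(X_1,\dots,X_d)\sim F_i$, let $F_{i[B]}$ denote the joint distribution of $(X_j)_{j\in B}$, and let $H_{0,B}$ be the hypothesis $F_{1[B]}=F_{2[B]}=\dots=F_{K[B]}$. Signal set: a set $L\subseteq[d]$ such that (1) $H_{0,L^c}$ is true, and (2) for every nonempty $L'\subseteq L$, $H_{0,L'}$ is false. Tree $\mathcal{T}$: a rooted binary tree whose nodes are subsets of $[d]$ such that (T1) the root is $[d]$; (T2) every non-leaf node $C$ has exactly two children, which are disjoint nonempty sets whose union is $C$; (T3) the leaves are singletons. Adjusted $p$-value of a node $C$: $p^C_{\mathrm{adj}}=p^C\cdot d/|C|$. A node $C$ is $\alpha$-terminal if $p^C_{\mathrm{adj}}\le\alpha$, $p^B_{\mathrm{adj}}\le\alpha$ for every ancestor $B$ of $C$, and $p^B_{\mathrm{adj}}>\alpha$ for every child $B$ of $C$ (the last condition is vacuous for leaves, the second for the root). GFS procedure at level $\alpha$: the selected set $S$ is the union of all $\alpha$-terminal nodes of $\mathcal{T}$ (empty if there are none). *)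

(* Defs.v *)
From HB Require Import structures.
From mathcomp Require Import all_boot all_order all_algebra.
From mathcomp Require Import all_classical all_reals all_analysis.

Set Implicit Arguments.
Unset Strict Implicit.
Unset Printing Implicit Defensive.

Import Order.TTheory GRing.Theory Num.Theory.
Local Open Scope ring_scope.

(** Observations live in R^d, represented as d.-tuple R with the product
    sigma-algebra (generated by the coordinates), as provided by the library. *)

Section Distributions.
Variables (R : realType) (d K : nat).

(** Coordinate projection x |-> (x_j)_{j in B}  (coordinates of B in
    increasing order). *)
Definition proj_coords (B : {set 'I_d}) (x : d.-tuple R) : #|B|.-tuple R :=
  [tuple tnth x (enum_val k) | k < #|B|].

Definition marginal (F : 'I_K -> probability (d.-tuple R) R)
  (i : 'I_K) (B : {set 'I_d}) : set (#|B|.-tuple R) -> \bar R :=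
  pushforward (F i) (proj_coords B).

Definition H0 (F : 'I_K -> probability (d.-tuple R) R) (B : {set 'I_d}) : Prop :=
  forall (i k : 'I_K) (A : set (#|B|.-tuple R)),
    measurable A -> @marginal F i B A = @marginal F k B A.

Definition signal_set (F : 'I_K -> probability (d.-tuple R) R) (L : {set 'I_d}) : Prop :=
  H0 F (~: L) /\
  (forall L' : {set 'I_d}, L' != finset.set0 -> L' \subset L -> ~ H0 F L').

End Distributions.
Arguments marginal {R d K} F i B _.

(** Rooted binary trees whose nodes are labelled by subsets of [d]. *)
Inductive ftree (d : nat) : Type :=
| FLeaf of 'I_d
| FNode of ftree d & ftree d.

Section Trees.
Variable d : nat.

Fixpoint node_set (t : ftree d) : {set 'I_d} :=
  match t with
  | FLeaf j => [set j]
  | FNode l r => node_set l :|: node_set r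
  end.

Fixpoint nodes (t : ftree d) : seq {set 'I_d} :=
  match t with
  | FLeaf j => [:: [set j]]
  | FNode l r => node_set (FNode l r) :: (nodes l ++ nodes r)
  end.

Fixpoint child_pairs (t : ftree d) : seq ({set 'I_d} * {set 'I_d}) :=
  match t with
  | FLeaf _ => [::]
  | FNode l r =>
      (node_set l, node_set (FNode l r)) :: (node_set r, node_set (FNode l r))
        :: (child_pairs l ++ child_pairs r)
  end.

Fixpoint anc_pairs (t : ftree d) : seq ({set 'I_d} * {set 'I_d}) :=
  match t with
  | FLeaf _ => [::]
  | FNode l r =>
      [seq (node_set (FNode l r), C) | C <- nodes l ++ nodes r]
        ++ (anc_pairs l ++ anc_pairs r)
  end.

(** (T2): every internal node has two disjoint nonempty children whose
    union is the node (the union part and (T3) hold by construction). *)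
Fixpoint valid_tree (t : ftree d) : bool :=
  match t with
  | FLeaf _ => true
  | FNode l r =>
      [&& [disjoint node_set l & node_set r], node_set l != finset.set0,
          node_set r != finset.set0, valid_tree l & valid_tree r]
  end.

Definition is_feature_tree (t : ftree d) : bool :=
  (node_set t == [set: 'I_d]) && valid_tree t.

Variable R : realType.

Definition p_adj (p : {set 'I_d} -> R) (C : {set 'I_d}) : R :=
  p C * d%:R / #|C|%:R.

Definition alpha_terminal (t : ftree d) (alpha : R) (p : {set 'I_d} -> R)
    (C : {set 'I_d}) : bool :=
  [&& C \in nodes t,
      p_adj p C <= alpha,
      all (fun BC : {set 'I_d} * {set 'I_d} =>
             (BC.2 == C) ==> (p_adj p BC.1 <= alpha)) (anc_pairs t)
    & all (fun BC : {set 'I_d} * {set 'I_d} =>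
             (BC.2 == C) ==> (alpha < p_adj p BC.1)) (child_pairs t)].

Definition gfs (t : ftree d) (alpha : R) (p : {set 'I_d} -> R) : {set 'I_d} :=
  \bigcup_(C <- undup (nodes t) | alpha_terminal t alpha p C) C.

End Trees.

(* Main.v *)
Require Import Defs.
From HB Require Import structures.
From mathcomp Require Import all_boot all_order all_algebra.
From mathcomp Require Import all_classical all_reals all_analysis.
From mathcomp Require Import lra.
Import Order.TTheory GRing.Theory Num.Theory.
Import numFieldNormedType.Exports.
Local Open Scope ring_scope.
Set Implicit Arguments.
Unset Strict Implicit.

Section TreeLemmas.
Variable d : nat.
Implicit Types t : ftree d.

Lemma node_set_neq0 t : node_set t != finset.set0.
Proof.
elim: t => [j|l IHl r IHr] /=; first by apply/set0Pn; exists j; rewrite inE.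
apply: contraNneq IHl => /eqP; rewrite finset.setU_eq0 => /andP[/eqP -> _] //.
Qed.

Lemma nodes_sub t C : C \in nodes t -> C \subset node_set t.
Proof.
elim: t C => [j|l IHl r IHr] C /=; first by rewrite inE => /eqP ->.
rewrite inE mem_cat => /orP[/eqP->//|/orP[/IHl|/IHr] h].
- by apply: (fintype.subset_trans h); apply: finset.subsetUl.
- by apply: (fintype.subset_trans h); apply: finset.subsetUr.
Qed.

Lemma nodes_neq0 t C : C \in nodes t -> C != finset.set0.
Proof.
elim: t C => [j|l IHl r IHr] C /=.
  by rewrite inE => /eqP ->; apply/set0Pn; exists j; rewrite inE.
rewrite inE mem_cat => /orP[/eqP->|/orP[/IHl|/IHr]] //.
exact: (node_set_neq0 (FNode l r)).
Qed.

Lemma node_set_in t : node_set t \in nodes t.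
Proof. by case: t => [j|l r] /=; rewrite inE eqxx. Qed.

Lemma leaf_in t j : j \in node_set t -> [set j] \in nodes t.
Proof.
elim: t => [k|l IHl r IHr] /=.
  by rewrite inE => /eqP ->; rewrite inE.
rewrite inE => /orP[/IHl|/IHr] h; rewrite inE mem_cat h ?orbT //.
Qed.

Lemma anc_sub t B C : (B, C) \in anc_pairs t -> B \in nodes t /\ C \subset B.
Proof.
elim: t => [k|l IHl r IHr] //=.
rewrite mem_cat => /orP[/mapP[C' hC' [-> ->]]|].
  split; first by rewrite inE eqxx.
  move: hC'; rewrite mem_cat => /orP[/nodes_sub h|/nodes_sub h].
  - by apply: (fintype.subset_trans h); apply: finset.subsetUl.
  - by apply: (fintype.subset_trans h); apply: finset.subsetUr.
rewrite mem_cat => /orP[/IHl|/IHr] [h1 h2]; split => //;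
  by rewrite inE mem_cat h1 ?orbT.
Qed.

Lemma child_in t B C : (B, C) \in child_pairs t -> B \in nodes t /\ C \in nodes t.
Proof.
elim: t => [k|l IHl r IHr] //=.
rewrite !in_cons => /orP[/eqP[-> ->]|/orP[/eqP[-> ->]|]].
- by split; rewrite ?eqxx ?mem_cat ?node_set_in ?orbT.
- by split; rewrite ?eqxx ?mem_cat ?node_set_in ?orbT.
rewrite mem_cat => /orP[/IHl|/IHr] [h1 h2];
  by rewrite !mem_cat h1 h2 ?orbT.
Qed.

Lemma child_proper t B C : valid_tree t -> (B, C) \in child_pairs t -> B \proper C.
Proof.
elim: t => [k|l IHl r IHr] //= /and5P[dis nl nr vl vr].
rewrite !in_cons => /orP[/eqP[-> ->]|/orP[/eqP[-> ->]|]].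
- rewrite finset.properEneq finset.subsetUl andbT; apply: contraNneq nr => e.
  apply/eqP/setP => x; rewrite inE; apply/negP => xr.
  have xl : x \in node_set l by rewrite e inE xr orbT.
  by move: (disjointFr dis xl); rewrite xr.
- rewrite finset.properEneq finset.subsetUr andbT; apply: contraNneq nl => e.
  apply/eqP/setP => x; rewrite inE; apply/negP => xl.
  have xr : x \in node_set r by rewrite e inE xl.
  by move: (disjointFr dis xl); rewrite xr.
rewrite mem_cat => /orP[/IHl|/IHr]; by apply.
Qed.

Lemma child_exists t C j : C \in nodes t -> j \in C -> C != [set j] ->
  exists B, (B, C) \in child_pairs t /\ j \in B.
Proof.
elim: t C => [k|l IHl r IHr] C /=.
  by rewrite inE => /eqP -> ; rewrite inE => /eqP -> ; rewrite eqxx.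
rewrite inE mem_cat => /orP[/eqP->|/orP[/IHl h|/IHr h]] jC neq.
- move: jC; rewrite inE => /orP[jl|jr].
  + by exists (node_set l); rewrite inE eqxx.
  + by exists (node_set r); rewrite !inE eqxx orbT.
- have [B [h1 h2]] := h jC neq; exists B; split => //.
  by rewrite !inE mem_cat h1 !orbT.
- have [B [h1 h2]] := h jC neq; exists B; split => //.
  by rewrite !inE mem_cat h1 !orbT.
Qed.

Variable L : {set 'I_d}.

Fixpoint fmax t : seq {set 'I_d} :=
  if node_set t \subset ~: L then [:: node_set t] else
  match t with
  | FLeaf _ => [::]
  | FNode l r => fmax l ++ fmax r
  end.

Lemma fmax_in t M : M \in fmax t -> M \in nodes t /\ M \subset ~: L.
Proof.
elim: t => [k|l IHl r IHr] /=.
  by case: ifP => // h; rewrite mem_seq1 => /eqP ->; split => //; rewrite /= mem_seq1 eqxx.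
case: ifP => h.
  by rewrite mem_seq1 => /eqP ->; split => //; rewrite /= in_cons eqxx.
rewrite mem_cat => /orP[/IHl|/IHr] [h1 h2]; split => //;
  by rewrite inE mem_cat h1 ?orbT.
Qed.

Lemma fmax_card t : valid_tree t -> (\sum_(M <- fmax t) #|M| <= #|node_set t|)%N.
Proof.
elim: t => [k|l IHl r IHr] /=.
  by case: ifP => _ _; rewrite ?big_cons ?big_nil ?addn0.
move=> /and5P[dis _ _ vl vr].
case: ifP => _; first by rewrite big_cons big_nil addn0.
rewrite big_cat cardsU.
have -> : node_set l :&: node_set r = finset.set0.
  by apply/eqP; rewrite finset.setI_eq0.
rewrite cards0 subn0; exact: leq_add (IHl vl) (IHr vr).
Qed.

Lemma fmax_cover t C : C \in nodes t -> C \subset ~: L ->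
  exists2 M, M \in fmax t & (M == C) || ((M, C) \in anc_pairs t).
Proof.
elim: t C => [k|l IHl r IHr] C /=.
  rewrite inE => /eqP -> h; rewrite h; exists [set k]; rewrite ?inE ?eqxx //.
rewrite inE mem_cat => hC hCL.
case: ifP => hT.
  exists (node_set l :|: node_set r); first by rewrite inE.
  move: hC => /orP[/eqP->|hC]; first by rewrite eqxx. apply/orP; right.
  by rewrite mem_cat; apply/orP; left; apply/mapP; exists C; rewrite ?mem_cat.
move: hC => /orP[/eqP e|/orP[hC|hC]].
- by move: hCL; rewrite e hT.
- have [M h1 h2] := IHl C hC hCL; exists M; first by rewrite mem_cat h1.
  case/orP: h2 => [->//|h2]; apply/orP; right.
  by rewrite mem_cat; apply/orP; right; rewrite mem_cat h2.
- have [M h1 h2] := IHr C hC hCL; exists M; first by rewrite mem_cat h1 orbT.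
  case/orP: h2 => [->//|h2]; apply/orP; right.
  by rewrite mem_cat; apply/orP; right; rewrite mem_cat h2 orbT.
Qed.

End TreeLemmas.

Lemma mem_bigcup_seq (T : finType) (s : seq {set T}) (P : pred {set T}) x :
  x \in \bigcup_(C <- s | P C) C -> exists C, [/\ C \in s, P C & x \in C].
Proof.
elim: s => [|C s IH]; first by rewrite big_nil inE.
rewrite big_cons; case: ifP => PC.
  rewrite inE => /orP[xC|/IH [C' [h1 h2 h3]]]; first by exists C; rewrite in_cons eqxx.
  by exists C'; rewrite in_cons h1 orbT.
by move=> /IH [C' [h1 h2 h3]]; exists C'; rewrite in_cons h1 orbT.
Qed.

Lemma bigcup_seq_mem (T : finType) (s : seq {set T}) (P : pred {set T}) x C :
  C \in s -> P C -> x \in C -> x \in \bigcup_(C <- s | P C) C.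
Proof.
elim: s => [|C' s IH] //; rewrite in_cons big_cons => /orP[/eqP <-|h] PC xC.
  by rewrite PC inE xC.
by case: ifP => _; rewrite ?inE IH ?orbT.
Qed.

Section Det.
Variables (R : realType) (d : nat) (L : {set 'I_d}) (T : ftree d) (alpha : R)
  (p : {set 'I_d} -> R).

Definition good := forall C, C \in nodes T -> C :&: L != finset.set0 ->
  p_adj p C <= alpha.

Lemma detA : valid_tree T -> node_set T = [set: 'I_d] -> good ->
  L \subset gfs T alpha p.
Proof.
move=> vT rT G; apply/fintype.subsetP => j jL.
have jn : [set j] \in nodes T by apply: leaf_in; rewrite rT inE.
have jG : forall B, B \in nodes T -> j \in B -> p_adj p B <= alpha.
  move=> B BT jB; apply: G => //; apply/set0Pn; exists j; by rewrite inE jB jL.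
apply: (@bigcup_seq_mem _ _ _ _ [set j]); rewrite ?mem_undup //; last by rewrite inE.
apply/and4P; split => //.
- by apply: jG => //; rewrite inE.
- apply/allP => -[B C] /= hBC; apply/implyP => /eqP eC; subst C.
  have [h1 h2] := anc_sub hBC; apply: jG => //.
  by move/fintype.subsetP: h2; apply; rewrite inE.
- apply/allP => -[B C] /= hBC; apply/implyP => /eqP eC; subst C.
  have pr := child_proper vT hBC.
  have [h1 _] := child_in hBC.
  have := nodes_neq0 h1; move: pr; rewrite finset.properEcard cards1 ltnS leqn0.
  by rewrite cards_eq0 => /andP[_ ->].
Qed.

Lemma detB : good -> gfs T alpha p :\: L != finset.set0 ->
  exists2 M, M \in fmax L T & p_adj p M <= alpha.
Proof.
move=> G /set0Pn [j]; rewrite inE => /andP[jL /mem_bigcup_seq [C [Cin Ct jC]]].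
rewrite mem_undup in Cin.
move: Ct => /and4P[_ pC anc chl].
have CL : C \subset ~: L.
  apply/fintype.subsetP => l lC; rewrite inE; apply/negP => lL.
  have neq : C != [set l].
    by apply/negP => /eqP eC; move: jC; rewrite eC inE => /eqP el; move: jL; rewrite el lL.
  have [B [hB lB]] := child_exists Cin lC neq.
  have [Bin _] := child_in hB.
  have pB : p_adj p B <= alpha.
    by apply: G => //; apply/set0Pn; exists l; rewrite inE lB lL.
  move/allP: chl => /(_ _ hB) /=; rewrite eqxx /=.
  by rewrite ltNge pB.
have [M Mf /orP[/eqP eM|hM]] := fmax_cover Cin CL; exists M => //.
  by rewrite eM.
by move/allP: anc => /(_ _ hM) /=; rewrite eqxx.
Qed.

End Det.

Section Gfsb.
Variables (R : realType) (d : nat) (T : ftree d).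

Definition gfsb (beta : {ffun {set 'I_d} -> bool}) : {set 'I_d} :=
  \bigcup_(C <- undup (nodes T) | [&& C \in nodes T, beta C,
      all (fun BC : {set 'I_d} * {set 'I_d} => (BC.2 == C) ==> beta BC.1) (anc_pairs T)
    & all (fun BC : {set 'I_d} * {set 'I_d} => (BC.2 == C) ==> ~~ beta BC.1) (child_pairs T)]) C.

Lemma gfs_b (alpha : R) p :
  gfs T alpha p = gfsb [ffun C => p_adj p C <= alpha].
Proof.
apply: eq_bigl => C; rewrite /alpha_terminal ffunE; congr [&& _, _, _ & _].
  by apply: eq_all => BC; rewrite ffunE.
by apply: eq_all => BC; rewrite ffunE ltNge.
Qed.

End Gfsb.

Local Open Scope classical_set_scope.

Lemma H0_sub (R : realType) (d K : nat) (F : 'I_K -> probability (d.-tuple R) R)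
  (B B' : {set 'I_d}) (x0 : 'I_d) :
  x0 \in B' -> B' \subset B -> H0 F B -> H0 F B'.
Proof.
move=> x0B' sB H i k A mA.
have hB : x0 \in B by move/fintype.subsetP: sB; apply.
pose g := fun y : #|B|.-tuple R =>
  [tuple tnth y (enum_rank_in hB (enum_val k')) | k' < #|B'|].
have mg : measurable_fun setT g.
  apply/measurable_fun_tnthP => k'.
  have -> : (@tnth _ R ^~ k' \o g) = (@tnth _ R ^~ (enum_rank_in hB (enum_val k'))).
    by apply: funext => y /=; rewrite tnth_mktuple.
  exact: measurable_tnth.
have e : proj_coords B' = g \o proj_coords B.
  apply: funext => x; apply: eq_from_tnth => k' /=.
  rewrite !tnth_mktuple enum_rankK_in //.
  by move/fintype.subsetP: sB; apply; exact: enum_valP.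
have mgA : measurable (g @^-1` A) by rewrite -[g @^-1` A]setTI; exact: mg.
rewrite /marginal /pushforward e !comp_preimage.
exact: (H i k _ mgA).
Qed.

Section Prob.
Context (dO : measure_display) (Om : measurableType dO) (R : realType).

Lemma mpre (f : Om -> R) : measurable_fun setT f ->
  forall Q, measurable Q -> measurable (f @^-1` Q).
Proof. by move=> mf Q mQ; rewrite -[f @^-1` Q]setTI; exact: mf. Qed.

Lemma mle (f : Om -> R) (a : R) : measurable_fun setT f ->
  measurable [set w | f w <= a].
Proof.
move=> mf; have -> : [set w | f w <= a] = f @^-1` `]-oo, a] .
  by apply/seteqP; split => w /=; rewrite in_itv /=.
exact: mpre.
Qed.

Lemma mmulc (f : Om -> R) (k : R) : measurable_fun setT f ->
  measurable_fun setT (fun w => f w * k).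
Proof. by move=> mf; apply: measurable_realfun.measurable_funM => //; exact: measurable_cst. Qed.

Lemma mabsge (f : Om -> R) (e : R) : measurable_fun setT f ->
  measurable [set w | e <= `|f w|].
Proof.
move=> mf; have mn : measurable_fun setT (fun w => `|f w|).
  exact: measurableT_comp.
have -> : [set w | e <= `|f w|] = (fun w => `|f w|) @^-1` `[e, +oo[.
  by apply/seteqP; split => w /=; rewrite in_itv /= andbT.
exact: mpre.
Qed.

Lemma fiber_meas (I : finType) (b : Om -> I) :
  (forall i, measurable [set w | b w = i]) ->
  forall Q : I -> Prop, measurable [set w | Q (b w)].
Proof.
move=> mb Q.
have -> : [set w | Q (b w)] = \bigcup_(i in Q) [set w | b w = i].
  apply/seteqP; split => w /=; first by move=> h; exists (b w).
  by move=> [i Qi ei]; rewrite ei.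
apply: fin_bigcup_measurable => //; exact: finite_finset.
Qed.

Lemma ffun_fiber_meas (I : finType) (g : I -> Om -> R) (a : R) :
  (forall i, measurable_fun setT (g i)) ->
  forall beta : {ffun I -> bool},
  measurable [set w | [ffun i => g i w <= a] = beta].
Proof.
move=> mg beta.
have -> : [set w | [ffun i => g i w <= a] = beta] =
    ~` \bigcup_(i in setT) [set w | (g i w <= a) != beta i].
  apply/seteqP; split => w /=.
    move=> <- [i _] /=; by rewrite ffunE eqxx.
  move=> h; apply/ffunP => i; rewrite ffunE; apply/eqP/negPn/negP => hn.
  by apply: h; exists i.
apply: measurableC; apply: fin_bigcup_measurable; first exact: finite_finset.
move=> i _; case: (beta i).
- have -> : [set w | (g i w <= a) != true] = ~` [set w | g i w <= a].
    by apply/seteqP; split => w /=; case: (g i w <= a).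
  exact/measurableC/mle.
- have -> : [set w | (g i w <= a) != false] = [set w | g i w <= a].
    by apply/seteqP; split => w /=; case: (g i w <= a).
  exact: mle.
Qed.

Lemma union_bound (mu : {measure set Om -> \bar R}) (I : Type) (s : seq I)
  (F : I -> set Om) : (forall i, measurable (F i)) ->
  (mu (\big[setU/set0]_(i <- s) F i) <= \sum_(i <- s) mu (F i))%E.
Proof.
move=> mF; elim: s => [|i s IH]; first by rewrite !big_nil measure0.
rewrite !big_cons; apply: le_trans (measureU2 _ (mF i) _) _.
  by apply: bigsetU_measurable.
exact: leeD2l.
Qed.

End Prob.

Lemma memU (T : Type) (I : eqType) (s : seq I) (F : I -> set T) w :
  (\big[setU/set0]_(i <- s) F i) w <-> exists i, i \in s /\ F i w.
Proof.
elim: s => [|i s IH]; first by rewrite big_nil; split => [//|[j [] ]].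
rewrite big_cons; split.
  case=> [h|/IH [j [js h]]]; first by exists i; rewrite mem_head.
  by exists j; rewrite in_cons js orbT.
move=> [j []]; rewrite in_cons => /orP[/eqP -> h|js h]; first by left.
by right; apply/IH; exists j.
Qed.

Theorem theorem1
  (R : realType) (K d : nat) (alpha : R)
  (HK : (2 <= K)%N) (Hd : (1 <= d)%N) (Halpha : 0 < alpha <= 1)
  (F : 'I_K -> probability (d.-tuple R) R)
  (L : {set 'I_d}) (HL : signal_set F L)
  (T : ftree d) (HT : is_feature_tree T)
  (dO : measure_display) (Omega : nat -> measurableType dO)
  (P : forall n, probability (Omega n) R)
  (p : forall n, {set 'I_d} -> Omega n -> R)
  (p_meas : forall n C, measurable_fun setT (p n C))
  (p_valid : forall C, C \in nodes T -> H0 F C ->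
     forall n (u : R), 0 <= u <= 1 ->
       (P n [set w | (p n C w <= u)%R] <= u%:E)%E)
  (p_consistent : forall C, C \in nodes T -> ~ H0 F C ->
     forall eps : R, 0 < eps ->
       (fun n => P n [set w | eps <= `|p n C w|]) @ \oo --> 0%E) :
  let S n (w : Omega n) := gfs T alpha (fun C => p n C w) in
  (fun n => P n [set w | L \subset S n w]) @ \oo --> 1%E /\
  (exists e : nat -> R, e @ \oo --> 0 /\
     forall n, (P n [set w | S n w :\: L != finset.set0] <= (alpha + e n)%:E)%E) /\
  (exists e : nat -> R, e @ \oo --> 0 /\
     forall n, (\int[P n]_w (#|S n w :\: L|%:R / (maxn #|S n w| 1)%:R)%:E
                  <= (alpha + e n)%:E)%E).
Proof.
move=> S.
case/andP: HT => /eqP rT vT.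
case/andP: Halpha => a0 a1.
have d0 : (0 < d%:R :> R) by rewrite ltr0n.
have cpos : forall C, C \in nodes T -> (0 < #|C|)%N.
  by move=> C /nodes_neq0; rewrite card_gt0.
have cle : forall C : {set 'I_d}, (#|C| <= d)%N.
  by move=> C; rewrite -[X in (_ <= X)%N]card_ord max_card.
pose NL := [seq C <- undup (nodes T) | C :&: L != finset.set0].
have NLin : forall C, C \in NL -> C \in nodes T /\ ~ H0 F C.
  move=> C; rewrite mem_filter mem_undup => /andP[/set0Pn [l lCL] CT]; split => // H.
  case: HL => _ HL2; apply: (HL2 (C :&: L)).
  - by apply/set0Pn; exists l.
  - exact: finset.subsetIr.
  - apply: (@H0_sub _ _ _ F C (C :&: L) l lCL _ H); exact: finset.subsetIl.
have fmH0 : forall M, M \in fmax L T -> M \in nodes T /\ H0 F M.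
  move=> M /fmax_in [MT ML]; have /set0Pn [x xM] := nodes_neq0 MT.
  by split => //; exact: (@H0_sub _ _ _ F _ M x xM ML HL.1).
pose eps (C : {set 'I_d}) : R := alpha * #|C|%:R / d%:R.
have eps0 : forall C, C \in nodes T -> 0 < eps C.
  move=> C CT; rewrite /eps; apply: divr_gt0 => //; apply: mulr_gt0 => //.
  by rewrite ltr0n; exact: cpos.
have padj_le : forall C, C \in nodes T -> forall x : R,
    (x * d%:R / #|C|%:R <= alpha) = (x <= eps C).
  move=> C CT x; have c0 : (0 < #|C|%:R :> R) by rewrite ltr0n; exact: cpos.
  by rewrite ler_pdivrMr // ler_pdivlMr // [in RHS]mulrC -mulrA [d%:R * _]mulrC mulrA.
pose Bad n C := [set w : Omega n | eps C <= `|p n C w|].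
pose V n M := [set w : Omega n | p n M w <= eps M].
have mBad : forall n C, measurable (Bad n C) by move=> n C; exact: mabsge.
have mV : forall n C, measurable (V n C) by move=> n C; exact: mle.
have goodw : forall n w, (forall C, C \in NL -> ~ Bad n C w) ->
    good L T alpha (fun C => p n C w).
  move=> n w h C CT CL.
  have /h : C \in NL by rewrite mem_filter CL mem_undup CT.
  rewrite /Bad /= => nb; rewrite /p_adj padj_le //.
  have lt : `|p n C w| < eps C by rewrite ltNge; apply/negP.
  exact: le_trans (ler_norm _) (ltW lt).
have Sfib : forall n (Q : {set 'I_d} -> Prop), measurable [set w | Q (S n w)].
  move=> n Q.
  have -> : [set w | Q (S n w)] = [set w | (Q \o gfsb T)
      [ffun C => p n C w * d%:R * (#|C|%:R)^-1 <= alpha]].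
    by apply/seteqP; split => w; rewrite /= /S gfs_b.
  apply: fiber_meas => beta; apply: ffun_fiber_meas => C.
  by apply: mmulc; apply: mmulc.
have mS : forall n (dT : measure_display) (T' : sigmaRingType dT) (h : {set 'I_d} -> T'),
    measurable_fun setT (fun w => h (S n w)).
  by move=> n dT T' h _ Y mY; rewrite setTI; exact: (Sfib n (fun X => Y (h X))).
have Pfin : forall n (A : set (Omega n)), measurable A -> P n A = (fine (P n A))%:E.
  move=> n A mA; rewrite fineK // ge0_fin_numE ?measure_ge0 //.
  by apply: le_lt_trans (probability_le1 _ mA) _; rewrite ltry.
pose e n := \sum_(C <- NL) fine (P n (Bad n C)).
have sumcvg : forall s : seq {set 'I_d}, (forall C, C \in s -> C \in NL) ->
    (fun n => \sum_(C <- s) fine (P n (Bad n C))) @ \oo --> 0.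
  elim => [|C s IH] h.
    have -> : (fun n => \sum_(C <- [::]) fine (P n (Bad n C))) = fun _ => 0.
      by apply: funext => n; rewrite big_nil.
    exact: cvg_cst.
  have -> : (fun n => \sum_(C' <- C :: s) fine (P n (Bad n C'))) =
      (fun n => fine (P n (Bad n C))) + (fun n => \sum_(C' <- s) fine (P n (Bad n C'))).
    by apply: funext => n; rewrite big_cons.
  rewrite -[X in _ --> X]addr0; apply: cvgD.
    have [CT nH] := NLin C (h C (mem_head _ _)).
    have := p_consistent C CT nH (eps C) (eps0 C CT).
    by move/fine_cvgP => [_ hh].
  by apply: IH => C' C's; apply: h; rewrite in_cons C's orbT.
have ecvg : e @ \oo --> 0 by exact: sumcvg.
have bigBad : forall n, (P n (\big[setU/set0]_(C <- NL) Bad n C) <= (e n)%:E)%E.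
  move=> n; apply: le_trans (union_bound (P n) NL (@mBad n)) _.
  rewrite /e -sumEFin; apply: lee_sum => C _; rewrite -Pfin //.
split.
  pose A n := [set w : Omega n | L \subset S n w].
  have mA : forall n, measurable (A n) by move=> n; exact: (Sfib n (fun X => L \subset X)).
  have le1 : forall n, fine (P n (A n)) <= 1.
    by move=> n; rewrite -lee_fin -Pfin //; exact: probability_le1.
  have ge : forall n, 1 - e n <= fine (P n (A n)).
    move=> n.
    have sub1 : ~` A n `<=` \big[setU/set0]_(C <- NL) Bad n C.
      move=> w /= nLS; apply/memU; apply: contrapT => hn; apply: nLS.
      apply: detA vT rT _; apply: goodw => C CN bC; apply: hn; by exists C.
    have hb : (P n (~` A n) <= (e n)%:E)%E.
      apply: le_trans (bigBad n); apply: le_measure; rewrite ?inE.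
      - exact: (measurableC (mA n)).
      - by apply: bigsetU_measurable => C _; exact: mBad.
      - exact: sub1.
    move: hb; rewrite probability_setC // (Pfin _ _ (mA n)) -EFinB lee_fin.
    lra.
  apply/fine_cvgP; split.
    by apply: nearW => n; rewrite (Pfin _ _ (mA n)).
  apply: (squeeze_cvgr (f := fun n => 1 - e n) (h := fun n : nat => (1 : R))).
    by apply: nearW => n; rewrite ge le1.
  rewrite -[X in _ --> X]subr0; apply: cvgB => //; exact: cvg_cst.
  exact: cvg_cst.
have part2 : forall n,
    (P n [set w | S n w :\: L != finset.set0] <= (alpha + e n)%:E)%E.
  move=> n.
  have mB := Sfib n (fun X => X :\: L != finset.set0).
  have sub2 : [set w | S n w :\: L != finset.set0] `<=`
      (\big[setU/set0]_(C <- NL) Bad n C) `|` \big[setU/set0]_(M <- fmax L T) V n M.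
    move=> w /= h.
    case: (pselect (exists C, C \in NL /\ Bad n C w)) => [ex|nex].
      by left; apply/memU.
    right; apply/memU.
    have G : good L T alpha (fun C => p n C w).
      by apply: goodw => C CN bC; apply: nex; exists C.
    have [M Mf hM] := detB G h; exists M; split => //.
    have [MT _] := fmH0 M Mf.
    by move: hM; rewrite /p_adj /= padj_le.
  have mU1 : measurable (\big[setU/set0]_(C <- NL) Bad n C).
    by apply: bigsetU_measurable => C _; exact: mBad.
  have mU2 : measurable (\big[setU/set0]_(M <- fmax L T) V n M).
    by apply: bigsetU_measurable => C _; exact: mV.
  apply: (@le_trans _ _ (P n ((\big[setU/set0]_(C <- NL) Bad n C) `|`
       \big[setU/set0]_(M <- fmax L T) V n M))).
    apply: le_measure; rewrite ?inE.
    - exact: mB.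
    - by apply: measurableU; [exact: mU1|exact: mU2].
    - exact: sub2.
  apply: le_trans (measureU2 _ mU1 mU2) _.
  rewrite EFinD [X in (_ <= X)%E]addeC; apply: leeD; first exact: bigBad.
  apply: le_trans (union_bound (P n) (fmax L T) (@mV n)) _.
  apply: (@le_trans _ _ (\sum_(M <- fmax L T) (eps M)%:E)%E).
    rewrite !big_seq; apply: lee_sum => M Mf; have [MT HM] := fmH0 M Mf.
    apply: p_valid => //; apply/andP; split; first exact/ltW/eps0.
    rewrite /eps ler_pdivrMr // mul1r.
    have : (#|M|%:R <= d%:R :> R) by rewrite ler_nat.
    have : (0 <= #|M|%:R :> R) by [].
    nra.
  rewrite sumEFin lee_fin /eps.
  have -> : \sum_(M <- fmax L T) alpha * #|M|%:R / d%:R =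
      alpha * (\sum_(M <- fmax L T) #|M|)%:R / d%:R.
    by rewrite natr_sum mulr_sumr mulr_suml.
  rewrite ler_pdivrMr //.
  have : ((\sum_(M <- fmax L T) #|M|)%:R <= d%:R :> R).
    rewrite ler_nat; apply: leq_trans (fmax_card L vT) _; rewrite rT cardsT card_ord //.
  have : (0 <= (\sum_(M <- fmax L T) #|M|)%:R :> R) by [].
  nra.
split; first by exists e.
exists e; split => // n.
apply: le_trans (part2 n).
pose g (X : {set 'I_d}) : R := (X :\: L != finset.set0)%:R.
have mB := Sfib n (fun X => X :\: L != finset.set0).
have -> : (P n [set w | S n w :\: L != finset.set0] = \int[P n]_w (g (S n w))%:E)%E.
  rewrite -[X in P n X]setIT -integral_indic //.
  apply: eq_integral => w _; rewrite indicE /g.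
  case: (boolP (S n w :\: L != finset.set0)) => hh.
    by rewrite mem_set.
  by rewrite memNset //= ; apply/negP.
have f10 : forall w : Omega n, setT w -> (0 <= ((#|S n w :\: L|%:R / (maxn #|S n w| 1)%:R : R))%:E)%E.
  move=> w Hw; rewrite lee_fin; apply: divr_ge0; exact: ler0n.
apply: (ge0_le_integral (P n) measurableT f10).
- move=> _ Y mY; rewrite setTI; exact: (Sfib n (fun X => Y ((#|X :\: L|%:R / (maxn #|X| 1)%:R : R)%:E))).
- move=> _ Y mY; rewrite setTI; exact: (Sfib n (fun X => Y (g X)%:E)).
move=> w Hw; rewrite lee_fin /g.
case: (boolP (S n w :\: L != finset.set0)) => hh /=.
  have m0 : (0 < (maxn #|S n w| 1)%:R :> R) by rewrite ltr0n leq_max orbT.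
  rewrite ler_pdivrMr // mul1r ler_nat.
  apply: leq_trans (leq_maxl _ 1); apply: subset_leq_card; exact: finset.subsetDl.
by move/negPn: hh => /eqP ->; rewrite cards0 mul0r.
Qed.
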